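(* Let $G$ be a finite connected unweighted graph with graph distance $d$, and fix a vertex $r$. For vertices $a,b$ write $(a.b)_r=\tfrac12\big(d(a,r)+d(b,r)-d(a,b)\big)$, and for vertices $x\neq y$ define $$f(x,y)=\max_{x=w_1,w_2,\dots,w_k=y}\ \min_{1\le i\le k-1}(w_i.w_{i+1})_r,$$ the maximum taken over all finite sequences of vertices (of arbitrary length $k\ge 2$) starting at $x$ and ending at $y$. Then for every pair of distinct vertices $x,y$ there exists a sequence $x=w_1,\dots,w_k=y$ attaining the maximum in $f(x,y)$ which is a path in $G$ (i.e. $w_iw_{i+1}\in E(G)$ for all $i$). Moreover, for such a maximizing path, letting $\alpha=\min_i d(w_i,r)$, we have $f(x,y)=\alpha-\tfrac12$ if there exists an $i$ with $d(w_i,r)=d(w_{i+1},r)=\alpha$, and $f(x,y)=\alpha$ otherwise.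
   Context: $(a.b)_r$ is the Gromov product with root $r$. A sequence attains the maximum in $f(x,y)$ if its value $\min_i (w_i.w_{i+1})_r$ equals $f(x,y)$. *)

(* Defs.v *)
From HB Require Import structures.
From mathcomp Require Import all_boot all_order all_algebra.
Set Implicit Arguments. Unset Strict Implicit. Unset Printing Implicit Defensive.
Import Order.TTheory GRing.Theory Num.Theory.
Local Open Scope ring_scope.

(* A finite simple graph: vertex type T : finType, adjacency e : rel T,
   assumed symmetric and irreflexive in the theorem. *)

Definition walkn (T : finType) (e : rel T) (a b : T) (n : nat) : bool :=
  [exists s : n.-tuple T, path e a s && (last a s == b)].

(* Graph distance: least number of edges of a walk from a to b.
   In a connected graph a shortest walk has < #|T| edges, so searching
   n in 0 .. #|T|-1 is exhaustive. *)
Definition dist (T : finType) (e : rel T) (a b : T) : nat :=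
  find (walkn e a b) (iota 0 #|T|).

Definition gromov (T : finType) (e : rel T) (r a b : T) : rat :=
  ((dist e a r)%:R + (dist e b r)%:R - (dist e a b)%:R) / 2.

Definition minl (l : seq rat) : rat :=
  match l with [::] => 0 | a :: l' => foldr Num.min a l' end.

(* value of the sequence w_1 = x, w_2 .. w_k = s : min_i (w_i . w_{i+1})_r *)
Definition seqval (T : finType) (e : rel T) (r x : T) (s : seq T) : rat :=
  minl (pairmap (gromov e r) x s).

Definition maximizing (T : finType) (e : rel T) (r x y : T) (s : seq T) : Prop :=
  [/\ s != [::], last x s = y &
      forall s' : seq T, s' != [::] -> last x s' = y ->
        seqval e r x s' <= seqval e r x s].

Definition alpha (T : finType) (e : rel T) (r x : T) (s : seq T) : nat :=
  foldr minn (dist e x r) (map (fun w => dist e w r) s).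

Definition flat_edge (T : finType) (e : rel T) (r x : T) (s : seq T) : bool :=
  has (fun p : T * T => (dist e p.1 r == alpha e r x s) && (dist e p.2 r == alpha e r x s))
      (zip (x :: s) s).

(* Main.v *)
Require Import Defs.
From mathcomp Require Import all_boot all_order all_algebra.
From mathcomp Require Import zify ring lra.
From Stdlib Require Import ClassicalEpsilon.
Import Order.TTheory GRing.Theory Num.Theory.
Set Implicit Arguments. Unset Strict Implicit. Unset Printing Implicit Defensive.
Local Open Scope ring_scope.


Lemma walknP (T : finType) (e : rel T) a b n :
  reflect (exists s : seq T, [/\ size s = n, path e a s & last a s = b])
          (walkn e a b n).
Proof.
apply: (iffP existsP) => [[s /andP [Hp /eqP Hl]]|[s [Hs Hp Hl]]].
  by exists (val s); rewrite size_tuple.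
have Hs' : size s == n by apply/eqP.
by exists (Tuple Hs'); rewrite /= Hp Hl eqxx.
Qed.

Lemma walkn_lt (T : finType) (e : rel T) a b :
  connect e a b -> has (walkn e a b) (iota 0 #|T|).
Proof.
move=> /connectP [p Hp ->].
case: (shortenP Hp) => p' Hp' Hu _.
apply/hasP; exists (size p').
  rewrite mem_iota /= add0n.
  have := card_uniqP Hu; have := max_card (mem (a :: p')) => H1 H2.
  rewrite H2 /= in H1. by [].
by apply/walknP; exists p'.
Qed.

Lemma dist_walk (T : finType) (e : rel T) a b :
  connect e a b -> walkn e a b (dist e a b).
Proof.
move=> /walkn_lt H; have := nth_find 0 H.
have Hlt : (dist e a b < #|T|)%N.
  by rewrite /dist -{2}(size_iota 0 #|T|) -has_find.
by rewrite nth_iota ?add0n.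
Qed.

Lemma dist_min (T : finType) (e : rel T) a b n :
  connect e a b -> walkn e a b n -> (dist e a b <= n)%N.
Proof.
move=> Hc Hw; rewrite leqNgt; apply/negP => Hlt.
have Hf : (n < size (iota 0 #|T|))%N.
  apply: (leq_trans Hlt). rewrite /dist ltnW // -has_find. exact: walkn_lt.
have := before_find 0 Hlt. rewrite nth_iota ?add0n ?Hw //.
by rewrite size_iota in Hf.
Qed.

Lemma walkn_cat (T : finType) (e : rel T) a b c m n :
  walkn e a b m -> walkn e b c n -> walkn e a c (m + n).
Proof.
move=> /walknP [s [Hs Hp Hl]] /walknP [t [Ht Hq Hm]].
apply/walknP; exists (s ++ t); split.
- by rewrite size_cat Hs Ht.
- by rewrite cat_path Hp Hl Hq.
- by rewrite last_cat Hl.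
Qed.

Lemma walkn_rev (T : finType) (e : rel T) a b n :
  symmetric e -> walkn e a b n -> walkn e b a n.
Proof.
move=> Hsym /walknP [s [Hs Hp Hl]]; apply/walknP.
elim: s a n Hs Hp Hl => [|c s IH] a n Hs Hp Hl.
  by exists [::]; rewrite -Hs /= -Hl.
move: Hp => /= /andP [Hac Hp].
have [s' [Hs' Hp' Hl']] := IH c (size s) erefl Hp Hl.
exists (rcons s' a); split.
- by rewrite size_rcons Hs' -Hs.
- by rewrite rcons_path Hp' Hl' Hsym.
- by rewrite last_rcons.
Qed.

Lemma dist_tri (T : finType) (e : rel T) a b c :
  (forall a b : T, connect e a b) ->
  (dist e a c <= dist e a b + dist e b c)%N.
Proof.
move=> Hc; apply: dist_min => //.
by apply: walkn_cat; apply: dist_walk.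
Qed.

Lemma dist_sym (T : finType) (e : rel T) a b :
  symmetric e -> (forall a b : T, connect e a b) ->
  dist e a b = dist e b a.
Proof.
move=> Hs Hc; apply/eqP; rewrite eqn_leq.
by rewrite !dist_min // walkn_rev // dist_walk.
Qed.

Lemma dist0 (T : finType) (e : rel T) a b :
  (forall a b : T, connect e a b) -> dist e a b = 0%N -> a = b.
Proof.
move=> Hc H; have := dist_walk (Hc a b); rewrite H.
by move=> /walknP [s [/size0nil -> _ <-]].
Qed.

Lemma dist_aa (T : finType) (e : rel T) a :
  (forall a b : T, connect e a b) -> dist e a a = 0%N.
Proof.
move=> Hc; apply/eqP; rewrite -leqn0; apply: dist_min => //.
by apply/walknP; exists [::].
Qed.

Lemma dist_edge (T : finType) (e : rel T) a b :
  (forall a b : T, connect e a b) -> e a b -> (dist e a b <= 1)%N.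
Proof.
move=> Hc Hab; apply: dist_min => //.
by apply/walknP; exists [:: b]; rewrite /= Hab.
Qed.

Lemma dist_edge1 (T : finType) (e : rel T) a b :
  irreflexive e -> (forall a b : T, connect e a b) -> e a b -> dist e a b = 1%N.
Proof.
move=> Hi Hc Hab; have := dist_edge Hc Hab.
case: (dist e a b) (@dist0 _ e a b Hc) => [|[|n]] // H _.
by move: Hab; rewrite H // Hi.
Qed.

Lemma dist_step (T : finType) (e : rel T) a b n :
  (forall a b : T, connect e a b) -> dist e a b = n.+1 ->
  exists c, e a c /\ dist e c b = n.
Proof.
move=> Hc Hd; have := dist_walk (Hc a b); rewrite Hd.
move=> /walknP [[|c s] [//= [Hs] /andP [Hac Hp] Hl]].
exists c; split => //; apply/eqP; rewrite eqn_leq.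
rewrite dist_min //; last by apply/walknP; exists s.
have := dist_tri a c b Hc; rewrite Hd.
have := dist_edge Hc Hac. lia.
Qed.

Lemma natle_rat (m n : nat) : (m <= n)%N -> (m%:R <= n%:R :> rat).
Proof. by rewrite ler_nat. Qed.

Lemma geo (T : finType) (e : rel T) r :
  symmetric e -> (forall a b : T, connect e a b) ->
  forall n a b, dist e a b = n -> exists q, [/\ path e a q, last a q = b &
    forall g, g <= gromov e r a b -> all (fun v => g <= v) (pairmap (gromov e r) a q)].
Proof.
move=> Hs Hc; elim=> [|n IH] a b Hd.
  by exists [::]; split => //; apply: dist0 Hd.
have [c [Hac Hcb]] := dist_step Hc Hd.
have [q [Hq Hl Hg]] := IH c b Hcb.
exists (c :: q); split => //=; first by rewrite Hac.
move=> g Hgab; have H1 := dist_tri b c r Hc.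
rewrite (dist_sym b c Hs Hc) Hcb in H1.
have H2 := dist_tri a c r Hc.
have H3 := dist_edge Hc Hac.
move: H1 H2 H3 => /natle_rat H1 /natle_rat H2 /natle_rat H3.
rewrite !natrD in H1 H2.
move: Hgab; rewrite /gromov Hd => Hgab.
apply/andP; split.
  rewrite /gromov. lra.
apply: Hg; rewrite /gromov Hcb. rewrite -[n.+1]addn1 natrD in Hgab. lra.
Qed.

Lemma topath (T : finType) (e : rel T) r :
  symmetric e -> (forall a b : T, connect e a b) ->
  forall s z, exists p, [/\ path e z p, last z p = last z s &
    forall g, all (fun v => g <= v) (pairmap (gromov e r) z s) ->
              all (fun v => g <= v) (pairmap (gromov e r) z p)].
Proof.
move=> Hs Hc; elim=> [|w s IH] z; first by exists [::].
have [p0 [Hp0 Hl0 Hg0]] := IH w.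
have [q [Hq Hlq Hgq]] := geo r Hs Hc erefl (a:=z) (b:=w).
exists (q ++ p0); split.
- by rewrite cat_path Hq Hlq.
- by rewrite last_cat Hlq.
- move=> g /= /andP [H1 H2].
  by rewrite pairmap_cat all_cat Hgq // Hlq Hg0.
Qed.

Lemma minl_mem (l : seq rat) : l != [::] -> minl l \in l.
Proof.
case: l => [|a l] //= _; elim: l => [|b l IH] /=; first by rewrite inE.
rewrite /Num.min; case: ifP => _.
  by rewrite !inE eqxx orbT.
by move: IH; rewrite !inE => /orP [->|->]; rewrite ?orbT.
Qed.

Lemma minl_le (l : seq rat) v : v \in l -> minl l <= v.
Proof.
case: l => [|a l] //=; elim: l v => [|b l IH] v /=.
  by rewrite inE => /eqP ->.
rewrite !inE ge_min => /or3P [/eqP ->|/eqP ->|Hv].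
- by apply/orP; right; apply: IH; rewrite inE eqxx.
- by rewrite lexx.
- by apply/orP; right; apply: IH; rewrite inE Hv orbT.
Qed.

Lemma minl_all (l : seq rat) g : l != [::] ->
  (g <= minl l) = all (fun v => g <= v) l.
Proof.
move=> Hl; apply/idP/allP => [H v Hv|H].
  exact: le_trans H (minl_le Hv).
exact: H (minl_mem Hl).
Qed.

Lemma pairmap_zip (T R : Type) (f : T -> T -> R) x s :
  pairmap f x s = [seq f p.1 p.2 | p <- zip (x :: s) s].
Proof. by elim: s x => [|c s IH] x //=; rewrite IH. Qed.

Lemma zip_edges (T : eqType) (e : rel T) x s :
  path e x s -> forall p, p \in zip (x :: s) s ->
  [/\ e p.1 p.2, p.1 \in x :: s & p.2 \in x :: s].
Proof.
elim: s x => [|c s IH] x //= /andP [Hxc Hp] p.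
rewrite inE => /orP [/eqP -> | Hin] /=.
  by rewrite !inE !eqxx /= orbT.
have [H1 H2 H3] := IH c Hp p Hin.
by split => //; rewrite inE; apply/orP; right.
Qed.

Lemma zip_cover (T : eqType) x (s : seq T) w :
  s != [::] -> w \in x :: s ->
  exists2 p, p \in zip (x :: s) s & (p.1 = w \/ p.2 = w).
Proof.
elim: s x => [|c s IH] x //= _.
rewrite !inE => /or3P [/eqP ->|/eqP ->|Hw].
- by exists (x, c); [rewrite inE eqxx | left].
- by exists (x, c); [rewrite inE eqxx | right].
- case: s IH Hw => [|d s] // IH Hw.
  have Hw' : w \in [:: c, d & s] by rewrite inE; apply/orP; right.
  have [p Hp Hpw] := IH c isT Hw'.
  by exists p => //; rewrite inE; apply/orP; right.
Qed.

Lemma alpha_le (T : finType) (e : rel T) r x s v :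
  v \in x :: s -> (alpha e r x s <= dist e v r)%N.
Proof.
rewrite /alpha; elim: s => [|c s IH] /=; first by rewrite inE => /eqP ->.
rewrite !inE => /or3P [Hv|/eqP ->|Hv].
- by rewrite geq_min IH ?orbT // inE Hv.
- by rewrite geq_min leqnn.
- by rewrite geq_min IH ?orbT // inE Hv orbT.
Qed.

Lemma alpha_mem (T : finType) (e : rel T) r x s :
  exists2 w, w \in x :: s & dist e w r = alpha e r x s.
Proof.
rewrite /alpha; elim: s => [|c s [w Hw Hd]] /=; first by exists x; rewrite ?inE.
case: (leqP (dist e c r) (foldr minn (dist e x r) [seq dist e w0 r | w0 <- s])) => H.
  by exists c; rewrite ?inE ?eqxx ?orbT.
exists w => //.
by move: Hw; rewrite !inE => /orP [->|->]; rewrite ?orbT.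
Qed.


Lemma edge_val (T : finType) (e : rel T) r a b :
  symmetric e -> irreflexive e -> (forall a b : T, connect e a b) -> e a b ->
  [/\ gromov e r a b = ((dist e a r)%:R + (dist e b r)%:R - 1) / 2,
      (dist e a r <= dist e b r + 1)%N & (dist e b r <= dist e a r + 1)%N].
Proof.
move=> Hs Hi Hc Hab; rewrite /gromov (dist_edge1 Hi Hc Hab); split => //.
- by have := dist_tri a b r Hc; rewrite (dist_edge1 Hi Hc Hab) addnC.
- have Hba : e b a by rewrite Hs.
  by have := dist_tri b a r Hc; rewrite (dist_edge1 Hi Hc Hba) addnC.
Qed.
Lemma part2 (T : finType) (e : rel T) r x s :
  symmetric e -> irreflexive e -> (forall a b : T, connect e a b) ->
  path e x s -> s != [::] ->
  seqval e r x s =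
    (if flat_edge e r x s then (alpha e r x s)%:R - 1 / 2
     else (alpha e r x s)%:R).
Proof.
move=> Hs Hi Hc Hp Hne.
set al := alpha e r x s.
set Z := zip (x :: s) s.
have HZ := zip_edges Hp.
have HV p : p \in Z -> [/\ gromov e r p.1 p.2 =
      ((dist e p.1 r)%:R + (dist e p.2 r)%:R - 1) / 2,
      (al <= dist e p.1 r)%N, (al <= dist e p.2 r)%N,
      (dist e p.1 r <= dist e p.2 r + 1)%N & (dist e p.2 r <= dist e p.1 r + 1)%N].
  move=> Hp0; have [H1 H2 H3] := HZ p Hp0.
  have [E1 E2 E3] := edge_val r Hs Hi Hc H1.
  by split => //; apply: alpha_le.
have Hsv : seqval e r x s = minl [seq gromov e r p.1 p.2 | p <- Z].
  by rewrite /seqval pairmap_zip.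
have HZne : [seq gromov e r p.1 p.2 | p <- Z] != [::].
  by rewrite /Z; move: Hne; case: (s).
have [q Hq Hmq] : exists2 q, q \in Z & seqval e r x s = gromov e r q.1 q.2.
  have := minl_mem HZne; rewrite -Hsv => /mapP [q Hq ->]; by exists q.
have Hle p : p \in Z -> seqval e r x s <= gromov e r p.1 p.2.
  by move=> Hp0; rewrite Hsv; apply: minl_le; apply/mapP; exists p.
have [Q1 Q2 Q3 Q4 Q5] := HV q Hq.
move: Q2 Q3 => /natle_rat Q2 /natle_rat Q3.
rewrite /flat_edge -/al -/Z; case: hasP => [[p Hp0 /andP [/eqP Ep1 /eqP Ep2]]|Hno].
  have := Hle p Hp0; have [P1 _ _ _ _] := HV p Hp0.
  rewrite P1 Ep1 Ep2 Hmq Q1 => H; lra.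
have [w Hw Hdw] := alpha_mem e r x s.
have [p Hp0 Hpw] := zip_cover Hne Hw.
have := Hle p Hp0; have [P1 P2 P3 P4 P5] := HV p Hp0.
have Hq2 : (2 * al + 1 <= dist e q.1 r + dist e q.2 r)%N.
  have : ~~ ((dist e q.1 r == al) && (dist e q.2 r == al)).
    by apply/negP => Hb; apply: Hno; exists q.
  move: Q2 Q3; rewrite !ler_nat.
  move: (dist e q.1 r) (dist e q.2 r) (al) => d1 d2 k.
  case: eqP => [->|]; case: eqP => [->|] //; lia.
move: Hq2 => /natle_rat; rewrite !natrD /= => Hq2.
have Hp2 : (dist e p.1 r + dist e p.2 r <= 2 * al + 1)%N.
  rewrite -/al in Hdw; move: P4 P5 P2 P3.
  case: Hpw => Ew; rewrite Ew ?Hdw;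
  move: (dist e p.1 r) (dist e p.2 r) (al) => d1 d2 k; lia.
move: Hp2 => /natle_rat; rewrite !natrD /= => Hp2.
rewrite P1 Hmq Q1 => H; lra.
Qed.


Lemma pathval (T : finType) (e : rel T) r x s :
  symmetric e -> irreflexive e -> (forall a b : T, connect e a b) ->
  path e x s -> s != [::] ->
  exists m, (m <= 2 * dist e x r + 1)%N /\ 2 * seqval e r x s + 1 = m%:R.
Proof.
move=> Hs Hi Hc Hp Hne; rewrite part2 //.
have := alpha_le e r (mem_head x s).
move: (alpha e r x s) => k Hk.
case: (flat_edge e r x s).
  exists (2 * k)%N; split; first lia.
  rewrite natrM; lra.
exists (2 * k + 1)%N; split; first lia.
rewrite natrD natrM; lra.
Qed.

Unset Implicit Arguments.

Theorem mainTheorem1 (T : finType) (e : rel T) (r x y : T) :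
  symmetric e -> irreflexive e -> (forall a b : T, connect e a b) -> x != y ->
  (exists s : seq T, path e x s /\ maximizing e r x y s) /\
  (forall s : seq T, path e x s -> maximizing e r x y s ->
     seqval e r x s =
       (if flat_edge e r x s then (alpha e r x s)%:R - 1 / 2
        else (alpha e r x s)%:R)).
Proof.
move=> Hs Hi Hc Hxy; split; last first.
  by move=> s Hp [Hne _ _]; apply: part2.
pose P n := exists s, [/\ path e x s, s != [::], last x s = y &
                           2 * seqval e r x s + 1 = n%:R].
pose Pb n := if excluded_middle_informative (P n) then true else false.
have PbP n : Pb n <-> P n.
  by rewrite /Pb; case: excluded_middle_informative.
have ne_of s : last x s = y -> s != [::].
  by case: s => //= H; move: Hxy; rewrite H eqxx.
have exP : exists n, Pb n.
  have /connectP [p Hp Hl] := Hc x y.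
  have Hne : p != [::] by apply: ne_of.
  have [m [_ Hm]] := pathval r Hs Hi Hc Hp Hne.
  by exists m; apply/PbP; exists p.
have ubP n : Pb n -> (n <= 2 * dist e x r + 1)%N.
  move=> /PbP [s [Hp Hne Hl Hv]].
  have [m [Hm Hv']] := pathval r Hs Hi Hc Hp Hne.
  by move: Hv; rewrite Hv' => /eqP; rewrite eqr_nat => /eqP <-.
case: (ex_maxnP exP ubP) => n0 /PbP [s0 [Hp0 Hne0 Hl0 Hv0]] Hmax.
exists s0; split => //; split => // s' Hne' Hl'.
have [p [Hp Hlp Hall]] := topath r Hs Hc s' x.
have Hnep : p != [::] by apply: ne_of; rewrite Hlp.
have Hpm : seqval e r x s' <= seqval e r x p.
  rewrite /seqval minl_all; last by case: (p) Hnep.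
  apply: Hall; rewrite -minl_all //; by case: (s') Hne'.
have [m [_ Hm]] := pathval r Hs Hi Hc Hp Hnep.
have Hmn : (m <= n0)%N by apply: Hmax; apply/PbP; exists p; split => //; rewrite Hlp.
move: Hmn; rewrite -(ler_nat rat) -Hm -Hv0 => H.
lra.
Qed.
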